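(* Let $X$ be a finite set with $|X|\ge 3$, let $T=(V,E)\in B(X)$, let $\mathcal T$ and $\mathcal T'$ be triplet covers of $T$, and let $x\in X$. Then: (P1) for every $v\in\mathring V$, $0\le\deg_{\mathcal T}(v)\le 3$, and $1\le\deg_{\mathcal T}(x)\le|X|-2$; (P2) if $\mathcal T'\subseteq\mathcal T$ then $E(\mathcal T)\subseteq E(\mathcal T')$; in particular, if $\deg_{\mathcal T'}(x)=1$ then $\deg_{\mathcal T}(x)=1$; (P3) if $\mathcal T$ is a minimal triplet cover for $T$, then for every $ab\in\mathcal T$ there is some $v\in\mathring V$ such that $a,v,b$ is a path in $G(\mathcal T)$; (P4) if $v$ is the vertex adjacent to $x$ in $T$, then $\{v,x\}\in E(\mathcal T)$; furthermore $\deg_{\mathcal T}(x)=1$ if and only if $\{v,x\}$ is the only edge of $G(\mathcal T)$ containing $x$; (P5) if $|X|\ge 4$, then $\deg_{\mathcal T}(x)=1$ if and only if $\mathcal T^{-x}$ is a triplet cover of $T-x$; (P6) if $\deg_{\mathcal T}(x)=1$ then $|\mathcal T|\ge|\mathcal T^{-x}|+2$.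
   Context: A binary phylogenetic $X$-tree is an unrooted tree $T=(V,E)$ whose leaf set is $X$ and all of whose non-leaf vertices are unlabelled of degree three; $B(X)$ is the set of such trees; $\mathring V$ is the set of interior vertices. Pairs in $\binom{X}{2}$ are written $ab$, triples $abc$. Given $\mathcal T\subseteq\binom{X}{2}$, a triple $abc$ supports $v\in\mathring V$ if $a,b,c$ lie one in each of the three connected components of $T$ with $v$ and its incident edges removed and $ab,ac,bc\in\mathcal T$; $S_v(\mathcal T)$ is the set of triples supporting $v$. $\mathcal T$ is a triplet cover for $T$ if $S_v(\mathcal T)\ne\emptyset$ for all $v\in\mathring V$; it is minimal if $\mathcal T-\{ab\}$ is not a triplet cover for $T$ for any $ab\in\mathcal T$. The support graph $G(\mathcal T)$ is the bipartite graph with vertex set $X\amalg\mathring V$ and edge set $E(\mathcal T)$, where $\{x,v\}\in E(\mathcal T)$ ($x\in X$, $v\in\mathring V$) iff $x\in A$ for all $A\in S_v(\mathcal T)$; $\deg_{\mathcal T}(p)$ denotes the degree of a vertex $p$ in $G(\mathcal T)$. For $x\in X$, $\mathcal T^{-x}$ is obtained from $\mathcal T$ by removing all pairs containing $x$. For $|X|\ge 4$, $T-x$ is the tree in $B(X-\{x\})$ obtained from $T$ by deleting leaf $x$ and its incident edge and suppressing the resulting degree-2 vertex. *)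

(* Defs.v *)
From mathcomp Require Import all_boot.
Set Implicit Arguments. Unset Strict Implicit. Unset Printing Implicit Defensive.

(* A phylogenetic tree is a
   vertex set W : {set V} together with an adjacency relation adj (only its
   restriction to W matters); the leaf set X : {set V} is a subset of W, i.e.
   leaves are identified with their labels.  Unordered pairs ab are the
   2-element sets [set a; b], triples abc the 3-element sets [set a; b; c]. *)

Section Phylo.
Variable V : finType.
Implicit Types (W X : {set V}) (adj : rel V) (P : {set {set V}}).

Definition rW W adj : rel V := fun p q => [&& p \in W, q \in W & adj p q].

Definition tdeg W adj v : nat := #|[set w in W | adj v w]|.

Definition is_tree W adj : Prop :=
  (forall u w, u \in W -> w \in W -> adj u w = adj w u) /\
  (forall u, u \in W -> ~~ adj u u) /\
  (forall u w, u \in W -> w \in W -> connect (rW W adj) u w) /\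
  (forall s : seq V, {subset s <= W} -> uniq s -> 3 <= size s ->
       ~~ cycle (rW W adj) s).

Definition binary_phylo W adj X : Prop :=
  is_tree W adj /\ X \subset W /\
  (forall v, v \in W -> tdeg W adj v = (if v \in X then 1 else 3)).

Definition interior W X : {set V} := W :\: X.

Definition separated W adj v a b : bool := ~~ connect (rW (W :\ v) adj) a b.

Definition supports W adj X P v (A : {set V}) : bool :=
  [exists a, exists b, exists c,
    [&& A == [set a; b; c], a \in X, b \in X, c \in X,
        separated W adj v a b, separated W adj v a c, separated W adj v b c,
        [set a; b] \in P, [set a; c] \in P & [set b; c] \in P]].

Definition Sv W adj X P v : {set {set V}} := [set A | supports W adj X P v A].

Definition pairs_on X P : bool := [forall A in P, (A \subset X) && (#|A| == 2)].

Definition triplet_cover W adj X P : Prop :=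
  pairs_on X P /\ (forall v, v \in interior W X -> Sv W adj X P v != set0).

Definition minimal_triplet_cover W adj X P : Prop :=
  triplet_cover W adj X P /\
  (forall A, A \in P -> ~ triplet_cover W adj X (P :\ A)).

Definition sg_edge W adj X P x v : bool :=
  [&& x \in X, v \in interior W X & [forall A in Sv W adj X P v, x \in A]].

(* E(P), edges {x,v} represented as ordered pairs (x, v) *)
Definition sg_edges W adj X P : {set V * V} :=
  [set e | sg_edge W adj X P e.1 e.2].

Definition degG W adj X P p : nat :=
  #|[set q | sg_edge W adj X P p q || sg_edge W adj X P q p]|.

Definition minus_pairs P x : {set {set V}} := [set A in P | x \notin A].

(* T - x : delete leaf x and its edge, suppress the resulting degree-2
   vertex u (the neighbour of x) by joining its two remaining neighbours *)
Definition leaf_nbr W adj x : V := odflt x [pick w in W | adj x w].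

Definition del_W W adj x : {set V} := W :\: [set x; leaf_nbr W adj x].

Definition del_adj W adj x : rel V := fun p q =>
  adj p q || [&& adj (leaf_nbr W adj x) p, adj (leaf_nbr W adj x) q & p != q].

End Phylo.

(* Main.v *)
Require Import Defs.
From mathcomp Require Import all_boot.
From mathcomp Require Import zify.
Set Implicit Arguments. Unset Strict Implicit. Unset Printing Implicit Defensive.


Section Gen.
Variable V : finType.
Implicit Types (W X : {set V}) (adj : rel V).

Lemma my_connect_closed (R : rel V) (S : pred V) a b :
  (forall p q, R p q -> S p -> S q) -> connect R a b -> S a -> S b.
Proof.
move=> cl /connectP [s pth ->]; elim: s a pth => [|y s IH] a //= /andP [Ray pth] Sa.
exact: IH pth (cl _ _ Ray Sa).
Qed.

Lemma my_connect_map (R R' : rel V) (f : V -> V) a b :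
  (forall p q, R p q -> connect R' (f p) (f q)) -> connect R a b -> connect R' (f a) (f b).
Proof.
move=> cl /connectP [s pth ->]; elim: s a pth => [|y s IH] a //= /andP [Ray pth].
exact: connect_trans (cl _ _ Ray) (IH _ pth).
Qed.

Lemma rW_sub W (W' : {set V}) adj p q : W' \subset W -> rW W' adj p q -> rW W adj p q.
Proof.
by move=> /subsetP sub /and3P [a b c]; rewrite /rW (sub _ a) (sub _ b) c.
Qed.

Lemma rW_sym W adj : (forall u w, u \in W -> w \in W -> adj u w = adj w u) ->
  forall W' : {set V}, W' \subset W -> symmetric (rW W' adj).
Proof.
move=> sy W' /subsetP sub p q; rewrite /rW.
case pW: (p \in W'); case qW: (q \in W') => //=.
by rewrite sy // sub.
Qed.

Lemma first_hit W adj u p w :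
  path (rW W adj) w p -> u \in p -> w != u ->
  exists n, [/\ n \in W, adj n u & connect (rW (W :\ u) adj) w n].
Proof.
elim: p w => [|y p IH] w //= /andP [r pth]; rewrite inE => up wu.
case: (eqVneq y u) => [yu|yu].
  subst y; move: r => /and3P [wW uW a]; exists w; split => //.
have up' : u \in p by move: up; rewrite eq_sym (negbTE yu).
have [n [nW nu c]] := IH y pth up' yu.
exists n; split => //; apply: connect_trans c; apply: connect1.
move: r => /and3P [wW yW a]; by rewrite /rW !inE wu yu wW yW a.
Qed.

End Gen.


Section Forest.
Variable V : finType.
Implicit Types (W X : {set V}) (adj : rel V).

Definition acyc W adj := forall s : seq V, {subset s <= W} -> uniq s -> 3 <= size s ->
       ~~ cycle (rW W adj) s.
Definition symW W adj := forall u w, u \in W -> w \in W -> adj u w = adj w u.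
Definition irrW W adj := forall u, u \in W -> ~~ adj u u.

Lemma path_in W adj e s : e \in W -> path (rW W adj) e s -> {subset e :: s <= W}.
Proof.
elim: s e => [|y s IH] e eW /=; first by move=> _ z; rewrite mem_seq1 => /eqP ->.
move=> /andP [/and3P [_ yW _] pth] z; rewrite in_cons => /orP [/eqP -> //|].
exact: IH.
Qed.

Lemma exists_leaf W adj w0 : symW W adj -> irrW W adj -> acyc W adj -> w0 \in W ->
  exists e, e \in W /\ #|[set w in W | adj e w]| <= 1.
Proof.
move=> sy ir ac w0W.
case: (boolP [exists e in W, #|[set w in W | adj e w]| <= 1]).
  by move=> /exists_inP [e eW h]; exists e.
move=> /exists_inPn big.
have ext : forall k, exists e rest, [/\ size rest = k, e \in W, uniq (e :: rest) &
    path (rW W adj) e rest].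
  elim=> [|k [e [rest [sz eW un pth]]]]; first by exists w0, [::].
  have bad : forall y, y \in W -> adj e y -> y \in e :: rest -> y = head e rest.
    move=> y yW ey; rewrite inE => /orP [/eqP ye|yr].
      by subst y; move: (ir e eW); rewrite ey.
    case: rest sz un pth yr => [//|z rest'] sz un pth.
    rewrite inE => /orP [/eqP -> //|yr'].
    exfalso.
    case/splitPr: yr' un pth => p1 p2 un pth.
    set s := [:: e, z & rcons p1 y].
    have sW : {subset s <= W}.
      move=> t ts; apply: (path_in eW pth).
      by rewrite /s -cat_rcons in ts *; rewrite -cat_cons -cat_cons mem_cat ts.
    have us : uniq s.
      by move: un; rewrite /s -cat_rcons -cat_cons -cat_cons cat_uniq => /andP [].
    have ss : 3 <= size s by rewrite /s /= size_rcons.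
    have := ac s sW us ss; rewrite /s /= rcons_path.
    move: pth; rewrite /= -cat_rcons cat_path => /and3P [-> -> _] /=.
    by rewrite last_rcons /rW yW eW /= sy // ey.
  have : ~~ ([set w in W | adj e w] \subset [set head e rest]).
    apply/negP => /subset_leq_card; rewrite cards1 => h.
    by move: (big e eW); rewrite h.
  case/subsetPn => y; rewrite inE => /andP [yW ey] yh.
  have yn : y \notin e :: rest.
    apply/negP => yin; move: yh; rewrite inE (bad y yW ey yin) eqxx //.
  exists y, (e :: rest); split => //=.
  - by rewrite sz.
  - by rewrite yn.
  - by rewrite pth andbT /rW yW eW sy.
have [e [rest [sz _ un _]]] := ext #|V|.
move/card_uniqP: un => /= h.
by move: (max_card (mem (e :: rest))); rewrite h /= sz ltnn.
Qed.

End Forest.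


Section Count.
Variable V : finType.
Implicit Types (W X : {set V}) (adj : rel V).

Definition EP W adj : {set V * V} := [set pq | rW W adj pq.1 pq.2].

Lemma EP_sum W adj : #|EP W adj| = \sum_(w in W) tdeg W adj w.
Proof.
rewrite -sum1_card.
rewrite (eq_bigl (fun pq : V * V => rW W adj pq.1 pq.2)); last by move=> pq; rewrite inE.
rewrite -(pair_big_dep xpredT (fun p q => rW W adj p q) (fun _ _ => 1)) /=.
rewrite [RHS]big_mkcond /=; apply: eq_bigr => p _.
rewrite sum1_card /tdeg; case pW: (p \in W).
  by apply: eq_card => q; rewrite !inE.
by apply: eq_card0 => q.
Qed.

Lemma EP_bound n : forall W adj, #|W| = n -> symW W adj -> irrW W adj -> acyc W adj ->
  #|EP W adj| <= n.-1 * 2.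
Proof.
elim: n => [|n IH] W adj cW sy ir ac.
  rewrite leqn0 cards_eq0; apply/eqP/setP => pq; rewrite !inE /rW.
  by move: cW => /eqP; rewrite cards_eq0 => /eqP ->; rewrite inE.
have [w0 w0W] : exists w0, w0 \in W.
  by apply/set0Pn; rewrite -card_gt0 cW.
have [e [eW le]] := exists_leaf sy ir ac w0W.
set W' := W :\ e.
have sub : W' \subset W by apply: subsetDl.
have cW' : #|W'| = n by move: cW; rewrite (cardsD1 e W) eW => -[].
have := IH W' adj cW'.
have sy' : symW W' adj by move=> u w uW wW; rewrite sy // (subsetP sub).
have ir' : irrW W' adj by move=> u uW; rewrite ir // (subsetP sub).
have ac' : acyc W' adj.
  move=> s sW us ss.
  have sW2 : {subset s <= W} by move=> t /sW /(subsetP sub).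
  apply: contra (ac s sW2 us ss); apply: sub_cycle => p q; exact: rW_sub.
move=> /(_ sy' ir' ac') IHb.
set N := [set w in W | adj e w].
have NW : N \subset W' by apply/subsetP => w; rewrite !inE => /andP [wW ew];
  rewrite wW andbT; apply/eqP => we; subst w; move: (ir e eW); rewrite ew.
have ss : EP W adj \subset EP W' adj :|: ((fun w => (e, w)) @: N) :|: ((fun w => (w, e)) @: N).
  apply/subsetP => [[p q]]; rewrite !inE /rW /= => /and3P [pW qW a].
  case: (eqVneq p e) => [pe|pe].
    subst p; apply/orP; left; apply/orP; right; apply/imsetP; exists q => //.
    by rewrite inE qW a.
  case: (eqVneq q e) => [qe|qe].
    subst q; apply/orP; right; apply/imsetP; exists p => //.
    by rewrite inE pW sy.
  by rewrite !inE pe qe pW qW a.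
have := subset_leq_card ss.
move=> h; apply: (leq_trans h).
have h0 := leq_of_leqif (leq_card_setU (EP W' adj :|: (fun w => (e, w)) @: N) ((fun w => (w, e)) @: N)).
have h1 : #|(fun w => (w, e)) @: N| <= #|N| := leq_imset_card _ _.
have h2 : #|(fun w => (e, w)) @: N| <= #|N| := leq_imset_card _ _.
have h3 := leq_of_leqif (leq_card_setU (EP W' adj) ((fun w => (e, w)) @: N)).
have h4 := subset_leq_card NW.
rewrite cW' in h4.
have le2 : #|N| <= 1 := le.
apply: (leq_trans h0). apply: (leq_trans (leq_add h3 h1)). rewrite -addnA; apply: (leq_trans (leq_add IHb (leq_add h2 (leqnn _)))). move: h4 le2; case: (n) => [|m] /=; lia.
Qed.

End Count.


Section Tree.
Variable V : finType.
Variables (W X : {set V}) (adj : rel V) (x : V).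
Hypothesis HX3 : 3 <= #|X|.
Hypothesis Hbp : binary_phylo W adj X.
Hypothesis xX : x \in X.

Lemma sy : symW W adj. Proof. by case: Hbp => [[]]. Qed.
Lemma ir : irrW W adj. Proof. by case: Hbp => [[_ []]]. Qed.
Lemma conn u w : u \in W -> w \in W -> connect (rW W adj) u w.
Proof. by case: Hbp => [[_ [_ []]]] => h _ _; apply: h. Qed.
Lemma ac : acyc W adj. Proof. by case: Hbp => [[_ [_ [_ h]]]]. Qed.
Lemma XW : X \subset W. Proof. by case: Hbp => [_ []]. Qed.
Lemma degs v : v \in W -> tdeg W adj v = (if v \in X then 1 else 3).
Proof. by case: Hbp => [_ [_ h]]; apply: h. Qed.

Lemma xW : x \in W. Proof. exact: (subsetP XW). Qed.

Lemma interior_card : #|interior W X| <= #|X| - 2.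
Proof.
have h1 := EP_sum W adj.
have [w0 w0X] : exists w, w \in X by apply/set0Pn; rewrite -card_gt0; lia.
have h2 := EP_bound (erefl #|W|) sy ir ac.
rewrite (big_setID X) /= in h1.
rewrite (setIidPr XW) in h1.
rewrite (eq_bigr (fun _ => 1)) in h1; last by move=> i iX; rewrite degs ?iX // (subsetP XW).
rewrite [X in _ + X](eq_bigr (fun _ => 3)) in h1; last first.
  by move=> i; rewrite inE => /andP [iX iW]; rewrite degs // (negbTE iX).
rewrite !sum_nat_const in h1.
have h3 := cardsID X W; rewrite (setIidPr XW) in h3.
rewrite /interior; rewrite h1 -h3 in h2; move: h2; case: (#|X|) HX3 => [|k] /= H3; lia.
Qed.

Definition u := leaf_nbr W adj x.

Lemma Nx : [set w in W | adj x w] = [set u].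
Proof.
have := degs xW; rewrite xX /tdeg => /eqP /cards1P [u0 e].
rewrite /u /leaf_nbr; case: pickP => [w /andP [wW a] | none].
  have : w \in [set w in W | adj x w] by rewrite inE wW a.
  by rewrite e inE => /eqP -> /=.
have : u0 \in [set w in W | adj x w] by rewrite e inE.
by rewrite inE none.
Qed.

Lemma adjx v : v \in W -> adj x v -> v = u.
Proof.
move=> vW a; have : v \in [set w in W | adj x w] by rewrite inE vW a.
by rewrite Nx inE => /eqP.
Qed.

Lemma uW : u \in W.
Proof. have : u \in [set w in W | adj x w] by rewrite Nx inE. by rewrite inE => /andP []. Qed.

Lemma xu : adj x u.
Proof. have : u \in [set w in W | adj x w] by rewrite Nx inE. by rewrite inE => /andP []. Qed.

Lemma ux : adj u x.
Proof. by rewrite sy ?uW ?xW // xu. Qed.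

Lemma u_neq_x : u != x.
Proof. by apply/eqP => e; move: (ir xW); rewrite -{2}e xu. Qed.

Lemma u_notX : u \notin X.
Proof.
apply/negP => uX.
have Nu : [set w in W | adj u w] = [set x].
  have := degs uW; rewrite uX /tdeg => /eqP /cards1P [u0 e].
  have : x \in [set w in W | adj u w] by rewrite inE xW sy ?xu ?xW ?uW.
  by rewrite e inE => /eqP <-.
have cl : forall p q, rW W adj p q -> p \in [set x; u] -> q \in [set x; u].
  move=> p q /and3P [pW qW a]; rewrite !inE => /orP [] /eqP e; subst p.
    by rewrite (adjx qW a) eqxx orbT.
  have : q \in [set w in W | adj u w] by rewrite inE qW a.
  by rewrite Nu inE => ->.
have : 0 < #|X :\: [set x; u]|.
  rewrite cardsD; have := subset_leq_card (subsetIr X [set x; u]).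
  rewrite cards2; case: (x != u) => /=; lia.
rewrite card_gt0 => /set0Pn [y]; rewrite !inE => /andP [yn yX].
have := my_connect_closed cl (conn xW (subsetP XW _ yX)).
by rewrite !inE eqxx => /(_ isT); rewrite (negbTE yn).
Qed.

Lemma u_int : u \in interior W X.
Proof. by rewrite /interior inE u_notX uW. Qed.

Definition Ru := rW (W :\ u) adj.

Lemma Ru_sym : symmetric Ru.
Proof. apply: rW_sym; [exact: sy | exact: subsetDl]. Qed.

Lemma x_isolated w : connect Ru x w -> w = x.
Proof.
move=> c; have cl : forall p q, Ru p q -> p \in pred1 x -> q \in pred1 x.
  move=> p q /and3P [pW qW a] /= /eqP e; subst p.
  move: qW; rewrite !inE => /andP [qu qW].
  by rewrite (adjx qW a) eqxx in qu.
by have := my_connect_closed cl c; rewrite !inE eqxx => /(_ isT) /eqP.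
Qed.

Lemma Nu3 : #|[set w in W | adj u w]| = 3.
Proof. by have := degs uW; rewrite (negbTE u_notX). Qed.

Lemma leaf_reach l : l \in X -> l != x ->
  exists2 n, n \in [set w in W | adj u w] :\ x & connect Ru l n.
Proof.
move=> lX lx; have lW := subsetP XW _ lX.
have lu : l != u by apply/eqP => e; move: u_notX; rewrite -e lX.
move: (conn lW uW) => /connectP [p pth ue].
have up : u \in p.
  have := mem_last l p; rewrite -ue inE eq_sym (negbTE lu) //.
have [n [nW nu c]] := first_hit pth up lu.
exists n => //; rewrite !inE nW sy ?uW // nu !andbT.
apply/eqP => e; subst n.
by move: lx; rewrite (x_isolated (_ : connect Ru x l)) ?eqxx // (sym_connect_sym Ru_sym).
Qed.

Lemma key (P : {set {set V}}) A : A \in Sv W adj X P u -> x \in A.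
Proof.
rewrite inE => /existsP [a] /existsP [b] /existsP [c].
case/and5P => /eqP -> aX bX cX /and4P [sab sac sbc _].
apply/negPn/negP; rewrite !inE !negb_or => /andP [/andP [ax bx] cx].
rewrite eq_sym in ax; rewrite eq_sym in bx; rewrite eq_sym in cx.
have := Nu3; rewrite (cardsD1 x) inE xW ux /= => -[] /eqP /cards2P [n1 [n2 [_ e]]].
have [na na12 ca] := leaf_reach aX ax.
have [nb nb12 cb] := leaf_reach bX bx.
have [nc nc12 cc] := leaf_reach cX cx.
rewrite e !inE in na12 nb12 nc12.
have cs := sym_connect_sym Ru_sym.
have J : forall l m n, connect Ru l n -> connect Ru m n -> connect Ru l m.
  by move=> l m n h1 h2; apply: connect_trans h1 _; rewrite cs.
move: sab sac sbc; rewrite /separated -/Ru.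
case/orP: na12 => /eqP ea; case/orP: nb12 => /eqP eb; case/orP: nc12 => /eqP ec;
  subst; by rewrite ?(J _ _ _ ca cb) ?(J _ _ _ ca cc) ?(J _ _ _ cb cc).
Qed.


Definition Wd := del_W W adj x.
Definition adjd := del_adj W adj x.

Lemma inWd z : (z \in Wd) = [&& z != x, z != u & z \in W].
Proof. by rewrite /Wd /del_W !inE negb_or -andbA. Qed.

Lemma sep_back v a b : v \in Wd ->
  connect (rW (Wd :\ v) adjd) a b -> connect (rW (W :\ v) adj) a b.
Proof.
rewrite inWd => /and3P [vx vu vW].
apply: (@my_connect_map _ _ _ id) => p q.
rewrite /rW !inE !negb_or /adjd /del_adj -/u.
case/and3P => /and3P [pv /andP [px pu] pW] /and3P [qv /andP [qx qu] qW] /orP [a0|/and3P [up uq pq]].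
  by apply: connect1; rewrite /rW !inE pv pW qv qW a0.
rewrite /=; apply: (@connect_trans _ _ u); apply: connect1; rewrite /rW !inE ?pv ?qv ?pW ?qW ?uW eq_sym ?vu //=.
  by rewrite sy ?uW.
Qed.

Lemma sep_fwd v a b : v \in Wd -> a \in X -> a != x -> b \in X -> b != x ->
  connect (rW (W :\ v) adj) a b -> connect (rW (Wd :\ v) adjd) a b.
Proof.
rewrite inWd => /and3P [vx vu vW] aX ax bX bx.
have [n nN] : exists n, n \in [set w in W | adj u w] :\: [set x; v].
  apply/set0Pn; rewrite -card_gt0 cardsD Nu3.
  have := subset_leq_card (subsetIr [set w in W | adj u w] [set x; v]).
  rewrite cards2; case: (x != v) => /=; lia.
move: nN; rewrite !inE negb_or => /and3P [/andP [nx nv] nW un].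
have nu : n != u by apply/eqP => e; move: (ir uW); rewrite -{2}e un.
set f := fun z => if (z == x) || (z == u) then n else z.
have au : a != u by apply/eqP => e; move: u_notX; rewrite -e aX.
have bu : b != u by apply/eqP => e; move: u_notX; rewrite -e bX.
have fa : f a = a by rewrite /f (negbTE ax) (negbTE au).
have fb : f b = b by rewrite /f (negbTE bx) (negbTE bu).
rewrite -{2}fa -{2}fb; apply: my_connect_map => p q.
rewrite /rW !inE => /and3P [/andP [pv pW] /andP [qv qW] a0].
rewrite /f.
case: (boolP ((p == x) || (p == u))) => Hp; case: (boolP ((q == x) || (q == u))) => Hq //=.
- move: Hq; rewrite negb_or => /andP [qx qu].
  case/orP: Hp => /eqP ?; subst p.
    by move: qu; rewrite (adjx qW a0) eqxx.
  case: (eqVneq n q) => [-> //|nq]; apply: connect1.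
  by rewrite /rW !inE !negb_or -/u nx nu nW qx qu qW nv qv /adjd /del_adj -/u un a0 nq orbT.
- move: Hp; rewrite negb_or => /andP [px pu].
  case/orP: Hq => /eqP ?; subst q.
    by move: pu; rewrite (adjx pW (_ : adj x p)) ?eqxx // sy ?xW.
  case: (eqVneq p n) => [-> //|pn]; apply: connect1.
  rewrite /rW !inE !negb_or -/u nx nu nW px pu pW nv pv /adjd /del_adj -/u un pn.
  have up' : adj u p by rewrite sy ?uW.
  by rewrite up' orbT.
- move: Hp Hq; rewrite !negb_or => /andP [px pu] /andP [qx qu].
  apply: connect1.
  by rewrite /rW !inE !negb_or -/u px pu pW qx qu qW pv qv /adjd /del_adj a0.
Qed.


End Tree.


Section Supp.
Variable V : finType.
Implicit Types (W X : {set V}) (adj : rel V) (P : {set {set V}}).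

Lemma card3 (a b c : V) : #|[set a; b; c]| <= 3.
Proof.
have h1 := leq_of_leqif (leq_card_setU ([set a] :|: [set b]) [set c]).
have h2 := leq_of_leqif (leq_card_setU [set a] [set b]).
rewrite !cards1 in h1 h2. lia.
Qed.

Lemma SvP W adj X P v A :
  reflect (exists a b c, [/\ A = [set a; b; c], [/\ a \in X, b \in X & c \in X],
     [/\ separated W adj v a b, separated W adj v a c & separated W adj v b c] &
     [/\ [set a; b] \in P, [set a; c] \in P & [set b; c] \in P]])
   (A \in Sv W adj X P v).
Proof.
rewrite inE /supports; apply: (iffP existsP).
  move=> [a] /existsP [b] /existsP [c].
  case/and5P => /eqP -> aX bX cX /and4P [sab sac sbc /and3P [p1 p2 p3]].
  by exists a, b, c; split.
move=> [a [b [c [-> [aX bX cX] [sab sac sbc] [p1 p2 p3]]]]].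
exists a; apply/existsP; exists b; apply/existsP; exists c.
by rewrite eqxx aX bX cX sab sac sbc p1 p2 p3.
Qed.

Lemma sep_neq W adj v a b : separated W adj v a b -> a != b.
Proof. by apply: contra => /eqP ->; rewrite connect0. Qed.

End Supp.


Section Main.
Variable V : finType.
Variables (W X : {set V}) (adj : rel V) (x : V).
Hypothesis HX3 : 3 <= #|X|.
Hypothesis Hbp : binary_phylo W adj X.
Hypothesis xX : x \in X.

Let uu := u W adj x.
Let keyL := @key V W X adj x HX3 Hbp xX.
Let u_intL : uu \in interior W X := @u_int V W X adj x HX3 Hbp xX.
Let adjxL := @adjx V W X adj x Hbp xX.
Let XWL : X \subset W := @XW V W X adj Hbp.

Lemma x_not_int : x \notin interior W X.
Proof. by rewrite inE xX. Qed.

Lemma degx_set (P : {set {set V}}) : [set q | sg_edge W adj X P x q || sg_edge W adj X P q x] =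
  [set q | sg_edge W adj X P x q].
Proof.
apply/setP => q; rewrite !inE; case: (sg_edge _ _ _ _ x q) => //=.
by rewrite /sg_edge (negbTE x_not_int) andbF.
Qed.

Lemma edge_xu (P : {set {set V}}) : sg_edge W adj X P x uu.
Proof.
rewrite /sg_edge xX u_intL; apply/forall_inP => A; exact: keyL.
Qed.

Lemma P1a (P : {set {set V}}) v : triplet_cover W adj X P -> v \in interior W X -> degG W adj X P v <= 3.
Proof.
move=> [_ cov] vI; have := cov v vI => /set0Pn [A AS].
have [a [b [c [eA _ _ _]]]] := SvP _ _ _ _ _ _ AS.
apply: leq_trans (card3 a b c); rewrite -eA; apply: subset_leq_card.
apply/subsetP => q; rewrite inE => /orP [].
  by rewrite /sg_edge; move: vI; rewrite inE => /andP [/negbTE -> _].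
by case/and3P => _ _ /forall_inP /(_ A AS).
Qed.

Lemma P1b (P : {set {set V}}) : 1 <= degG W adj X P x.
Proof.
rewrite /degG degx_set card_gt0; apply/set0Pn; exists uu; rewrite inE; exact: edge_xu.
Qed.

Lemma P1c (P : {set {set V}}) : degG W adj X P x <= #|X| - 2.
Proof.
apply: leq_trans (@interior_card V W X adj x HX3 Hbp xX).
rewrite /degG degx_set; apply: subset_leq_card; apply/subsetP => q.
by rewrite inE => /and3P [].
Qed.

Lemma Sv_mono (P P' : {set {set V}}) v A : P' \subset P -> A \in Sv W adj X P' v -> A \in Sv W adj X P v.
Proof.
move=> sub /SvP [a [b [c [eA H1 H2 [p1 p2 p3]]]]].
apply/SvP; exists a, b, c; split => //; split; exact: (subsetP sub).
Qed.

Lemma P2 (T T' : {set {set V}}) : T' \subset T ->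
  sg_edges W adj X T \subset sg_edges W adj X T' /\
  (degG W adj X T' x = 1 -> degG W adj X T x = 1).
Proof.
move=> sub.
have es : forall p q, sg_edge W adj X T p q -> sg_edge W adj X T' p q.
  move=> p q /and3P [pX qI /forall_inP h]; rewrite /sg_edge pX qI /=.
  by apply/forall_inP => A AS; apply: h; exact: Sv_mono AS.
split.
  by apply/subsetP => e; rewrite !inE; apply: es.
move=> d1; apply/eqP; rewrite eqn_leq P1b andbT -d1 /degG !degx_set.
by apply: subset_leq_card; apply/subsetP => q; rewrite !inE; apply: es.
Qed.


Lemma Sv_remove (P : {set {set V}}) (B A : {set V}) v z : z \in B -> z \notin A ->
  A \in Sv W adj X P v -> A \in Sv W adj X (P :\ B) v.
Proof.
move=> zB zA /SvP [a [b [c [eA H1 H2 [p1 p2 p3]]]]].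
have nB : forall C : {set V}, C \subset A -> C != B.
  move=> C CA; apply/eqP => e; subst C.
  by move: zA; rewrite (subsetP CA _ zB).
apply/SvP; exists a, b, c; split => //; split; rewrite !inE ?p1 ?p2 ?p3 andbT nB //;
  rewrite eA; apply/subsetP => t; rewrite !inE => /orP [] ->; by rewrite ?orbT.
Qed.

Lemma P3 (T : {set {set V}}) : minimal_triplet_cover W adj X T ->
     forall a b, [set a; b] \in T ->
       exists v, v \in interior W X /\
         (a, v) \in sg_edges W adj X T /\ (b, v) \in sg_edges W adj X T.
Proof.
move=> [[po cov] mini] a b abT.
have po' : pairs_on X (T :\ [set a; b]).
  apply/forall_inP => A; rewrite inE => /andP [_ AT]; exact: (forall_inP po).
have : ~~ [forall v in interior W X, Sv W adj X (T :\ [set a; b]) v != set0].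
  apply/negP => /forall_inP h; apply: (mini _ abT); split => //.
case/forall_inPn => v vI /negPn /eqP e0.
have abX : [set a; b] \subset X by have := forall_inP po _ abT => /andP [].
have inA : forall z, z \in [set a; b] -> forall A, A \in Sv W adj X T v -> z \in A.
  move=> z zab A AS; apply/negPn/negP => zA.
  by have := Sv_remove zab zA AS; rewrite e0 inE.
exists v; split => //; split; rewrite inE /sg_edge vI (subsetP abX) ?inE ?eqxx ?orbT //=;
  apply/forall_inP; apply: inA; by rewrite !inE eqxx ?orbT.
Qed.


Lemma S1 (T : {set {set V}}) :
  degG W adj X T x = 1 <-> [set q | sg_edge W adj X T x q] = [set uu].
Proof.
rewrite /degG degx_set; split.
  move=> /eqP /cards1P [w e]; have : uu \in [set q | sg_edge W adj X T x q].
    by rewrite inE edge_xu.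
  by rewrite e inE => /eqP ->.
by move=> ->; rewrite cards1.
Qed.

Lemma P4 (T : {set {set V}}) v : v \in W -> adj x v ->
     (x, v) \in sg_edges W adj X T /\
     (degG W adj X T x = 1 <->
        forall e, e \in sg_edges W adj X T -> x \in [set e.1; e.2] -> e = (x, v)).
Proof.
move=> vW xv; have ev := adjxL vW xv; rewrite ev.
split; first by rewrite inE edge_xu.
rewrite S1; split.
  move=> eS [p q]; rewrite !inE /= => ed /orP [] /eqP Ep; rewrite -Ep in ed *.
    have : q \in [set q | sg_edge W adj X T x q] by rewrite inE.
    by rewrite eS inE => /eqP ->.
  by move: ed; rewrite /sg_edge (negbTE x_not_int) andbF.
move=> h; apply/eqP; rewrite eqEsubset; apply/andP; split.
  apply/subsetP => q; rewrite !inE => ed.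
  have := h (x, q); rewrite !inE eqxx /= => /(_ ed isT) [->]; by rewrite eqxx.
by apply/subsetP => q; rewrite !inE => /eqP ->; rewrite edge_xu.
Qed.


Let sep_backL := @sep_back V W X adj x Hbp xX.
Let sep_fwdL := @sep_fwd V W X adj x HX3 Hbp xX.

Lemma P5 (T : {set {set V}}) : triplet_cover W adj X T ->
     (degG W adj X T x = 1 <->
        triplet_cover (del_W W adj x) (del_adj W adj x) (X :\ x) (minus_pairs T x)).
Proof.
move=> [po cov]; rewrite S1; split.
  move=> eS; split.
    apply/forall_inP => A; rewrite inE => /andP [AT xA].
    have /andP [AX ->] := forall_inP po _ AT; rewrite andbT.
    apply/subsetP => t tA; rewrite !inE (subsetP AX _ tA) andbT.
    by apply/eqP => e; move: xA; rewrite -e tA.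
  move=> v; rewrite /interior inE => /andP [vn vWd].
  have vWd' : v \in Wd W adj x by [].
  move: (vWd); rewrite !inE negb_or => /andP [/andP [vx vu] vW].
  have vX : v \notin X by move: vn; rewrite !inE vx.
  have : ~~ sg_edge W adj X T x v.
    apply/negP => ed; have : v \in [set q | sg_edge W adj X T x q] by rewrite inE.
    by rewrite eS inE (negbTE vu).
  rewrite /sg_edge xX /= inE vX vW /= negb_forall_in => /exists_inP [A AS xA].
  apply/set0Pn; exists A.
  move: AS => /SvP [a [b [c [eA [aX bX cX] [sab sac sbc] [p1 p2 p3]]]]].
  have nx : forall t, t \in A -> t != x by move=> t tA; apply/eqP => e; move: xA; rewrite -e tA.
  have ax : a != x by apply: nx; rewrite eA !inE eqxx.
  have bx : b != x by apply: nx; rewrite eA !inE eqxx ?orbT.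
  have cx : c != x by apply: nx; rewrite eA !inE eqxx ?orbT.
  have mp : forall p q, p != x -> q != x -> [set p; q] \in T -> [set p; q] \in minus_pairs T x.
    by move=> p q px qx pq; rewrite inE pq !inE negb_or eq_sym px eq_sym qx.
  have sp : forall p q, separated W adj v p q -> separated (del_W W adj x) (del_adj W adj x) v p q.
    by move=> p q; apply: contra; apply: sep_backL.
  apply/SvP; exists a, b, c; split => //.
  - by split; rewrite !inE ?ax ?bx ?cx.
  - by split; apply: sp.
  - by split; apply: mp.
move=> [po' cov']; apply/eqP; rewrite eqEsubset; apply/andP; split; last first.
  by apply/subsetP => q; rewrite !inE => /eqP ->; rewrite edge_xu.
apply/subsetP => q; rewrite !inE => ed; apply/negPn/negP => qu.
move: (ed) => /and3P [_ qI /forall_inP hq].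
move: qI; rewrite inE => /andP [qX qW].
have qx : q != x by apply/eqP => e; move: qX; rewrite e xX.
have qWd : q \in Wd W adj x by rewrite !inE negb_or qx qu qW.
have qI' : q \in interior (del_W W adj x) (X :\ x) by rewrite inE qWd !inE (negbTE qX) andbF.
have := cov' q qI' => /set0Pn [A AS].
move: AS => /SvP [a [b [c [eA [aX bX cX] [sab sac sbc] [p1 p2 p3]]]]].
move: aX bX cX; rewrite !inE => /andP [ax aX] /andP [bx bX] /andP [cx cX].
have sp : forall p q', p \in X -> p != x -> q' \in X -> q' != x ->
   separated (del_W W adj x) (del_adj W adj x) q p q' -> separated W adj q p q'.
  move=> p q' pX px q'X q'x; apply: contra; exact: sep_fwdL.
have mp : forall C, C \in minus_pairs T x -> C \in T by move=> C; rewrite inE => /andP [].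
have AS : A \in Sv W adj X T q.
  apply/SvP; exists a, b, c; split => //.
  - by split; apply: sp.
  - by split; apply: mp.
have := hq A AS; rewrite eA !inE.
by rewrite eq_sym (negbTE ax) eq_sym (negbTE bx) eq_sym (negbTE cx).
Qed.


Lemma two_pairs (T : {set {set V}}) (C D : {set V}) : C \in T -> D \in T -> C != D ->
  x \in C -> x \in D -> #|minus_pairs T x| + 2 <= #|T|.
Proof.
move=> CT DT CD xC xD.
have sub : [set C; D] \subset T by apply/subsetP => E; rewrite !inE => /orP [] /eqP ->.
have := subset_leq_card sub; rewrite cards2 CD => h.
have : minus_pairs T x \subset T :\: [set C; D].
  apply/subsetP => E; rewrite !inE => /andP [ET xE]; rewrite ET andbT.
  by apply/negP => /orP [] /eqP e; move: xE; rewrite e ?xC ?xD.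
move/subset_leq_card; rewrite (cardsDS sub) cards2 CD; move=> h2; simpl in h, h2; apply: leq_trans (leq_add h2 (leqnn 2)) _; rewrite subnK; [exact: leqnn | exact: h].
Qed.

Lemma P6 (T : {set {set V}}) : triplet_cover W adj X T ->
  degG W adj X T x = 1 -> #|T| >= #|minus_pairs T x| + 2.
Proof.
move=> [po cov] _; have := cov uu u_intL => /set0Pn [A AS].
have xA := keyL AS.
move: AS => /SvP [a [b [c [eA [aX bX cX] [sab sac sbc] [p1 p2 p3]]]]].
have ab := sep_neq sab; have ac := sep_neq sac; have bc := sep_neq sbc.
move: xA; rewrite eA !inE => /orP [/orP [] | ] /eqP e.
- apply: (two_pairs p1 p2); try by rewrite e !inE eqxx ?orbT.
  apply/eqP => E; have : c \in [set a; c] by rewrite !inE eqxx orbT.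
  by rewrite -E !inE eq_sym (negbTE ac) (eq_sym c) (negbTE bc).
- apply: (two_pairs p1 p3); try by rewrite e !inE eqxx ?orbT.
  apply/eqP => E; have : a \in [set a; b] by rewrite !inE eqxx.
  by rewrite E !inE (negbTE ab) (negbTE ac).
- apply: (two_pairs p2 p3); try by rewrite e !inE eqxx ?orbT.
  apply/eqP => E; have : a \in [set a; c] by rewrite !inE eqxx.
  by rewrite E !inE (negbTE ab) (negbTE ac).
Qed.


Lemma main_sec (T T' : {set {set V}}) :
  triplet_cover W adj X T ->
  triplet_cover W adj X T' ->
  ((forall v, v \in interior W X -> 0 <= degG W adj X T v <= 3) /\
   1 <= degG W adj X T x <= #|X| - 2) /\
  (T' \subset T ->
     sg_edges W adj X T \subset sg_edges W adj X T' /\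
     (degG W adj X T' x = 1 -> degG W adj X T x = 1)) /\
  (minimal_triplet_cover W adj X T ->
     forall a b, [set a; b] \in T ->
       exists v, v \in interior W X /\
         (a, v) \in sg_edges W adj X T /\ (b, v) \in sg_edges W adj X T) /\
  (forall v, v \in W -> adj x v ->
     (x, v) \in sg_edges W adj X T /\
     (degG W adj X T x = 1 <->
        forall e, e \in sg_edges W adj X T -> x \in [set e.1; e.2] -> e = (x, v))) /\
  (4 <= #|X| ->
     (degG W adj X T x = 1 <->
        triplet_cover (del_W W adj x) (del_adj W adj x) (X :\ x)
                      (minus_pairs T x))) /\
  (degG W adj X T x = 1 -> #|T| >= #|minus_pairs T x| + 2).
Proof.
move=> HT HT'.
split; first split.
- by move=> v vI; rewrite P1a.
- by rewrite P1b P1c.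
split; first exact: P2.
split; first exact: P3.
split; first by move=> v; apply: P4.
split; first by move=> _; apply: P5.
exact: P6.
Qed.

End Main.

Unset Implicit Arguments.

Theorem proposition1 (V : finType) (W X : {set V}) (adj : rel V)
    (T T' : {set {set V}}) (x : V) :
  3 <= #|X| ->
  binary_phylo W adj X ->
  triplet_cover W adj X T ->
  triplet_cover W adj X T' ->
  x \in X ->
  (* (P1) *)
  ((forall v, v \in interior W X -> 0 <= degG W adj X T v <= 3) /\
   1 <= degG W adj X T x <= #|X| - 2) /\
  (* (P2) *)
  (T' \subset T ->
     sg_edges W adj X T \subset sg_edges W adj X T' /\
     (degG W adj X T' x = 1 -> degG W adj X T x = 1)) /\
  (* (P3) *)
  (minimal_triplet_cover W adj X T ->
     forall a b, [set a; b] \in T ->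
       exists v, v \in interior W X /\
         (a, v) \in sg_edges W adj X T /\ (b, v) \in sg_edges W adj X T) /\
  (* (P4) *)
  (forall v, v \in W -> adj x v ->
     (x, v) \in sg_edges W adj X T /\
     (degG W adj X T x = 1 <->
        forall e, e \in sg_edges W adj X T -> x \in [set e.1; e.2] -> e = (x, v))) /\
  (* (P5) *)
  (4 <= #|X| ->
     (degG W adj X T x = 1 <->
        triplet_cover (del_W W adj x) (del_adj W adj x) (X :\ x)
                      (minus_pairs T x))) /\
  (* (P6) *)
  (degG W adj X T x = 1 -> #|T| >= #|minus_pairs T x| + 2).
Proof.
move=> HX3 Hbp HT HT' xX.
exact: (main_sec HX3 Hbp xX HT HT').
Qed.
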